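(* Let $n>2$, let $d\subseteq 2\times(n-2)$ be a Young diagram, and let $d^|=\{s,t\}$ with $1\le s<t\le n$ be its set of vertical steps. For odd integers $0<a<b<2n$ let $I_{a,b}=\{e^{\frac{\pi}{n}ia},e^{\frac{\pi}{n}ib}\}$ (every 2-element subset of the roots of $\zeta^n=-1$ has this form). Then $S_d(I_{a,b})=0$ if and only if $n$ divides $\frac{b-a}{2}(t-s)$.
   Context: A Young diagram $d\subseteq 2\times(n-2)$ has row lengths $n-2\ge d_1\ge d_2\ge0$. Its profile path runs from the top-right corner to the bottom-left corner of the $2\times(n-2)$ rectangle in $n$ unit steps, labelled $1,\dots,n$ in order; $d^|\subset\{1,\dots,n\}$ is the set of labels of the two vertical steps. $S_d(z_1,z_2)=\sum_T z_1^{t_1}z_2^{t_2}$ is the two-variable Schur polynomial, summing over semistandard tableaux $T$ of shape $d$ with entries in $\{1,2\}$ (rows weakly increasing, columns strictly increasing), $t_i$ the number of entries equal to $i$; being symmetric, it can be evaluated on an unordered 2-element set. *)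

(* Defs.v *)
From HB Require Import structures.
From mathcomp Require Import all_boot all_order all_algebra all_field.
Unset Printing Implicit Defensive.
Import Order.TTheory GRing.Theory Num.Theory.
Local Open Scope ring_scope.

(* A Young diagram d inside the 2 x (n-2) rectangle is given by its row
   lengths d1 >= d2 (with n-2 >= d1).  Cells are pairs (i, j) with
   i : 'I_2 (row, 0 = top) and j : 'I_(n-2) (column). *)
Definition in_diag (n d1 d2 : nat) (c : 'I_2 * 'I_(n - 2)) : bool :=
  (c.2 < (if c.1 == ord0 then d1 else d2))%N.

(* A filling with entries in {1,2}; entry k : 'I_2 stands for k+1.
   Cells outside the diagram are normalised to ord0 so that fillings
   correspond bijectively to functions on the cells of d. *)
Definition ssyt (n d1 d2 : nat) (T : {ffun 'I_2 * 'I_(n - 2) -> 'I_2}) : bool :=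
  [&& [forall c, ~~ in_diag n d1 d2 c ==> (T c == ord0)],
      [forall i : 'I_2, forall j : 'I_(n - 2), forall j' : 'I_(n - 2),
         [&& in_diag n d1 d2 (i, j), in_diag n d1 d2 (i, j') & (j <= j')%N]
         ==> (T (i, j) <= T (i, j'))%N] &
      [forall i : 'I_2, forall i' : 'I_2, forall j : 'I_(n - 2),
         [&& in_diag n d1 d2 (i, j), in_diag n d1 d2 (i', j) & (i < i')%N]
         ==> (T (i, j) < T (i', j))%N]].

Definition tcount (n d1 d2 : nat) (T : {ffun 'I_2 * 'I_(n - 2) -> 'I_2})
  (k : 'I_2) : nat :=
  #|[pred c | in_diag n d1 d2 c && (T c == k)]|.

Definition schur2 {R : comNzRingType} (n d1 d2 : nat) (z1 z2 : R) : R :=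
  \sum_(T : {ffun 'I_2 * 'I_(n - 2) -> 'I_2} | ssyt n d1 d2 T)
     z1 ^+ tcount n d1 d2 T ord0 * z2 ^+ tcount n d1 d2 T ord_max.

(* Profile path of d, from the top-right corner to the bottom-left corner
   of the 2 x (n-2) rectangle: n steps, true = vertical step. *)
Definition profile (n d1 d2 : nat) : seq bool :=
  nseq (n - 2 - d1) false ++ [:: true] ++ nseq (d1 - d2) false
  ++ [:: true] ++ nseq d2 false.

Definition vsteps (n d1 d2 : nat) : seq nat :=
  [seq i.+1 | i <- iota 0 n & nth false (profile n d1 d2) i].

(* e^{pi i / n} in algC: the principal n-th root of -1 (minimal argument) *)
Definition zeta (n : nat) : algC := n.-root (-1).

(* Main.v *)
Require Import Defs.
From HB Require Import structures.
From mathcomp Require Import all_boot all_order all_algebra all_field.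
Import Order.TTheory GRing.Theory Num.Theory.
Local Open Scope ring_scope.
From mathcomp Require Import zify ring lra.

Section NatPart.
Local Open Scope nat_scope.

Lemma nth_prof_gen A B C i :
  nth false (nseq A false ++ [:: true] ++ nseq B false ++ [:: true] ++ nseq C false) i
  = (i == A) || (i == A + B + 1).
Proof.
rewrite nth_cat size_nseq nth_nseq.
case: ltnP => h1.
  by apply/esym/norP; split; apply/eqP; lia.
case E: (i - A) => [|k] /=.
  by apply/esym/orP; left; apply/eqP; lia.
rewrite nth_cat size_nseq nth_nseq.
case: ltnP => h2.
  by apply/esym/norP; split; apply/eqP; lia.
case E2: (k - B) => [|k2] /=.
  by apply/esym/orP; right; apply/eqP; lia.
rewrite nth_nseq if_same.
by apply/esym/norP; split; apply/eqP; lia.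
Qed.

Lemma vsteps_ts n d1 d2 s t : (d2 <= d1)%N -> (d1 <= n - 2)%N -> (2 < n)%N -> (s < t)%N ->
  vsteps n d1 d2 =i [:: s; t] -> (t - s = (d1 - d2).+1)%N.
Proof.
move=> h21 h1 hn hst hv.
have mem : forall x, x \in vsteps n d1 d2 -> x = (n - 1 - d1)%N \/ x = (n - d2)%N.
  move=> x /mapP [i]; rewrite mem_filter mem_iota /profile nth_prof_gen => /andP [hp _] ->.
  case/orP: hp => /eqP ->; [left|right]; lia.
have hs : s \in vsteps n d1 d2 by rewrite hv inE eqxx.
have ht : t \in vsteps n d1 d2 by rewrite hv !inE eqxx orbT.
case: (mem _ hs) => es; case: (mem _ ht) => et; lia.
Qed.

Lemma I2 (x : 'I_2) : x = ord0 \/ x = ord_max.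
Proof. case: x => [[|[|x]]] Hx; [left|right|] => //; exact: val_inj. Qed.

Lemma om0 : (ord_max == ord0 :> 'I_2) = false. Proof. by []. Qed.
Lemma o0m : (ord0 == ord_max :> 'I_2) = false. Proof. by []. Qed.

Lemma card_I2 N (P : 'I_2 * 'I_N -> bool) :
  #|[pred c | P c]| = (#|[pred j | P (ord0, j)]| + #|[pred j | P (ord_max, j)]|)%N.
Proof.
have cs : forall (T : finType) (Q : pred T), #|[pred c | Q c]| = (\sum_c (Q c : nat))%N.
  move=> T Q; rewrite -sum1_card big_mkcond /=.
  by apply: eq_bigr => c _; rewrite inE; case: (Q c).
rewrite !cs; transitivity (\sum_(i : 'I_2) \sum_(j : 'I_N) (P (i, j) : nat))%N.
  by rewrite pair_big /=; apply: eq_big => // -[i j].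
rewrite big_ord_recl big_ord1; congr (_ + _)%N.
by apply: eq_bigr => j _; have -> : lift ord0 ord0 = ord_max :> 'I_2 by apply: val_inj.
Qed.

Lemma card_int N lo hi : #|[pred j : 'I_N | (lo <= j < hi)%N]| = (minn hi N - lo)%N.
Proof.
rewrite -sum1_card big_mkcond /=.
rewrite (eq_bigr (fun j : 'I_N => ((lo <= j < hi)%N : nat))); last first.
  by move=> j _; rewrite inE; case: (_ && _).
rewrite -(big_mkord xpredT (fun j => ((lo <= j < hi)%N : nat))).
elim: N => [|N IH]; first by rewrite big_geq //; lia.
rewrite big_nat_recr //= IH.
case: (ltnP N hi) => h1; case: (leqP lo N) => h2 /=; lia.
Qed.

Definition Tk n d1 d2 (k : nat) : {ffun 'I_2 * 'I_(n - 2) -> 'I_2} :=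
  [ffun c : 'I_2 * 'I_(n - 2) => if (if c.1 == ord0 then (d1 - k <= c.2 < d1)%N else (c.2 < d2)%N)
             then ord_max else ord0].

Lemma card_eq_int N (P : pred 'I_N) lo hi :
  (forall j : 'I_N, P j = (lo <= j < hi)%N) -> #|[pred j | P j]| = (minn hi N - lo)%N.
Proof. by move=> h; rewrite -card_int; apply: eq_card => j; rewrite !inE h. Qed.

Ltac tk_tac := move=> j; rewrite /in_diag ffunE /=; case: ifP => h; rewrite /= ?eqxx ?om0 ?o0m /=; lia.

Lemma tcount_Tk n d1 d2 k : (d2 <= d1)%N -> (d1 <= n - 2)%N -> (k <= d1 - d2)%N ->
  tcount n d1 d2 (Tk n d1 d2 k) ord0 = (d1 - k)%N /\
  tcount n d1 d2 (Tk n d1 d2 k) ord_max = (d2 + k)%N.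
Proof.
move=> h21 h1 hk; rewrite /tcount !card_I2; split.
  rewrite (@card_eq_int _ _ 0 (d1 - k)); last by tk_tac.
  rewrite (@card_eq_int _ _ 0 0); last by tk_tac.
  lia.
rewrite (@card_eq_int _ _ (d1 - k) d1); last by tk_tac.
rewrite (@card_eq_int _ _ 0 d2); last by tk_tac.
lia.
Qed.

Ltac fin_tac := rewrite /= ?eqxx ?om0 ?o0m /=; repeat (case: ifP => ? /=); rewrite ?eqxx ?om0 ?o0m /=; lia.

Lemma ssyt_Tk n d1 d2 k : (d2 <= d1)%N -> (k <= d1 - d2)%N -> ssyt n d1 d2 (Tk n d1 d2 k).
Proof.
move=> h21 hk; apply/and3P; split.
- apply/forallP => -[i j]; apply/implyP; rewrite /in_diag ffunE /=.
  by case: (I2 i) => ->; fin_tac.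
- apply/forallP => i; apply/forallP => j; apply/forallP => j'; apply/implyP.
  rewrite /in_diag !ffunE /=.
  by case: (I2 i) => ->; fin_tac.
- apply/forallP => i; apply/forallP => i'; apply/forallP => j; apply/implyP.
  rewrite /in_diag !ffunE /=.
  by case: (I2 i) => ->; case: (I2 i') => ->; fin_tac.
Qed.

Lemma ssyt_char n d1 d2 (T : {ffun 'I_2 * 'I_(n - 2) -> 'I_2}) :
  (d2 <= d1)%N -> (d1 <= n - 2)%N -> ssyt n d1 d2 T ->
  exists2 k, (k <= d1 - d2)%N & T = Tk n d1 d2 k.
Proof.
move=> h21 h1 /and3P [h0 hrow hcol].
have H0 : forall c, ~~ in_diag n d1 d2 c -> T c = ord0.
  by move=> c hc; apply/eqP; move/forallP: h0 => /(_ c) /implyP; apply.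
have Hrow : forall i j j', in_diag n d1 d2 (i, j) -> in_diag n d1 d2 (i, j') ->
    (j <= j')%N -> (T (i, j) <= T (i, j'))%N.
  move=> i j j' a b c; move/forallP: hrow => /(_ i) /forallP /(_ j) /forallP /(_ j') /implyP.
  by apply; rewrite a b c.
have Hcol : forall j : 'I_(n - 2), (j < d2)%N -> (T (ord0, j) < T (ord_max, j))%N.
  move=> j hj; move/forallP: hcol => /(_ ord0) /forallP /(_ ord_max) /forallP /(_ j) /implyP.
  by apply; rewrite /in_diag /=; apply/and3P; split => //; lia.
have row1 : forall j : 'I_(n - 2), T (ord_max, j) = if (j < d2)%N then ord_max else ord0.
  move=> j; case: ifP => hj.
    by have := Hcol j hj; case: (I2 (T (ord_max, j))) => -> //=; rewrite ltn0.
  by apply: H0; rewrite /in_diag /= ?om0 hj.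
have row0lt : forall j : 'I_(n - 2), (j < d2)%N -> T (ord0, j) = ord0.
  move=> j hj; have := Hcol j hj; case: (I2 (T (ord0, j))) => // -> /= h.
  by have := ltn_ord (T (ord_max, j)); lia.
case: (boolP [exists j : 'I_(n - 2), (j < d1)%N && (T (ord0, j) == ord_max)]) => hex.
  have hP : exists j, [exists j' : 'I_(n - 2), (val j' == j) && (j < d1)%N && (T (ord0, j') == ord_max)].
    case/existsP: hex => j /andP [a b]; exists (val j); apply/existsP; exists j.
    by rewrite eqxx a b.
  case: (ex_minnP hP) => j0 /existsP [j0' /andP [/andP [/eqP ej hj0] hT]] hmin.
  have hj0d2 : (d2 <= j0)%N.
    case: (ltnP j0 d2) => // hlt; rewrite -ej in hlt.
    by move: hT; rewrite (row0lt _ hlt).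
  exists (d1 - j0); first lia.
  apply/ffunP => -[i j]; rewrite ffunE /=.
  case: (I2 i) => -> /=; last by rewrite row1 ?om0.
  rewrite ?eqxx.
  case: (ltnP j d1) => hjd1; last first.
    rewrite H0 /in_diag /= ?eqxx -?ltnNge //.
    by case: ifP => //; lia.
  have -> : (d1 - (d1 - j0) = j0)%N by lia.
  rewrite andbT.
  case: (leqP j0 j) => hjj.
    have ej' : nat_of_ord j0' = j0 := ej.
    have := Hrow ord0 j0' j; rewrite /in_diag /= (eqP hT) ej' hjj hjd1 hj0 => /(_ isT isT isT).
    by case: (I2 (T (ord0, j))) => -> .
  case: (I2 (T (ord0, j))) => hTj; first by rewrite hTj.
  exfalso; suff : (j0 <= j)%N by lia.
  by apply: hmin; apply/existsP; exists j; rewrite eqxx hjd1 hTj eqxx.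
exists 0%N => //.
apply/ffunP => -[i j]; rewrite ffunE /=.
case: (I2 i) => -> /=; last by rewrite row1 ?om0.
rewrite ?eqxx subn0.
have -> : ((d1 <= j) && (j < d1))%N = false by lia.
case: (ltnP j d1) => hjd1; last by rewrite H0 /in_diag /= ?eqxx -?ltnNge.
case: (I2 (T (ord0, j))) => // hTj.
by move/negP: hex; case; apply/existsP; exists j; rewrite hjd1 hTj eqxx.
Qed.

Lemma schur2_eq (R : comNzRingType) n d1 d2 (z1 z2 : R) :
  (d2 <= d1)%N -> (d1 <= n - 2)%N ->
  schur2 n d1 d2 z1 z2 = (\sum_(k < (d1 - d2).+1) z1 ^+ (d1 - k) * z2 ^+ (d2 + k))%R.
Proof.
move=> h21 h1; rewrite /schur2.
pose f := fun k : 'I_(d1 - d2).+1 => Tk n d1 d2 k.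
have hk : forall k : 'I_(d1 - d2).+1, (k <= d1 - d2)%N by move=> k; rewrite -ltnS.
have inj : {in [set: 'I_(d1 - d2).+1] &, injective f}.
  move=> k1 k2 _ _ e; apply: val_inj.
  have [_ e1] := @tcount_Tk _ _ _ _ h21 h1 (hk k1).
  have [_ e2] := @tcount_Tk _ _ _ _ h21 h1 (hk k2).
  by move: e1; rewrite /f in e; rewrite e e2 => /eqP; rewrite eqn_add2l => /eqP.
rewrite (eq_bigl (fun T => T \in f @: setT)); last first.
  move=> T; apply/idP/imsetP.
    case/(@ssyt_char _ _ _ _ h21 h1) => k hk' ->.
    by exists (Ordinal (hk' : (k < (d1 - d2).+1)%N)).
  by case=> k _ ->; apply: ssyt_Tk.
rewrite big_imset //=.
apply: eq_big => [k|k _]; first by rewrite inE.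
by have [-> ->] := @tcount_Tk _ _ _ _ h21 h1 (hk k).
Qed.

End NatPart.

Lemma key_real (R : realFieldType) (a b c s : R) :
  a ^+ 2 + b ^+ 2 = 1 -> c ^+ 2 + s ^+ 2 = 1 -> 0 <= b -> 0 <= s ->
  c <= a -> b * (a * s - b * c) <= 0 -> a != 1 -> c = a /\ s = b.
Proof.
move=> hab hcs hb hs hca hk ha1.
have ca : c = a.
  have [b0|bp] := eqVneq b 0.
    subst b. have : a ^+ 2 = 1 by rewrite -hab expr0n addr0.
    move/eqP; rewrite sqrf_eq1 (negbTE ha1) /= => /eqP am1.
    subst a; nra.
  have bpos : 0 < b by rewrite lt_def bp hb.
  have {}hk : a * s <= b * c by move: hk; rewrite pmulr_rle0 // subr_le0.
  apply/eqP; rewrite eq_le hca /=.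
  case: (lerP 0 a) => ha.
  - rewrite leNgt; apply/negP => hlt.
    case: (lerP 0 c) => hc; last nra.
    have h2 : c ^+ 2 < a ^+ 2 by rewrite ltr_pXn2r.
    have h3 : b ^+ 2 < s ^+ 2 by lra.
    have h4 : b < s by move: h3; rewrite ltr_pXn2r //; lra.
    nra.
  - rewrite leNgt; apply/negP => hlt.
    have h2 : a ^+ 2 < c ^+ 2 by nra.
    have h3 : s ^+ 2 < b ^+ 2 by lra.
    have h4 : s < b by move: h3; rewrite ltr_pXn2r //; lra.
    nra.
split => //; subst c.
have : s ^+ 2 = b ^+ 2 by lra.
move/eqP; rewrite eqf_sqr => /orP[/eqP//|/eqP sb]. nra.
Qed.

Lemma algR_le (x y : algR) : (x <= y) = (val x <= val y). Proof. by []. Qed.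

Lemma aD (x y : algR) : val (x + y) = val x + val y. Proof. by []. Qed.
Lemma aM (x y : algR) : val (x * y) = val x * val y. Proof. by []. Qed.
Lemma a1 : val (1 : algR) = 1. Proof. by []. Qed.
Lemma aX (x : algR) n : val (x ^+ n) = val x ^+ n. Proof. exact: (rmorphXn algRval). Qed.


Lemma key_C (y s : algC) : `|y| = 1 -> `|s| = 1 -> 0 <= 'Im y -> 0 <= 'Im s ->
  'Re s <= 'Re y -> 'Re (s * y^* ^+ 2) <= 'Re s -> y != 1 -> s = y.
Proof.
move=> ny ns hy hs hle hk y1.
pose A := in_algR (Creal_Re y). pose B := in_algR (Creal_Im y).
pose Cc := in_algR (Creal_Re s). pose S := in_algR (Creal_Im s).
have eAB : A ^+ 2 + B ^+ 2 = 1.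
  by apply: val_inj; rewrite aD !aX /= -normC2_Re_Im ny expr1n.
have eCS : Cc ^+ 2 + S ^+ 2 = 1.
  by apply: val_inj; rewrite aD !aX /= -normC2_Re_Im ns expr1n.
have hk' : B * (A * S - B * Cc) <= 0.
  rewrite algR_le !aM /=.
  move: hk; rewrite expr2 ReM !ReM !ImM !Re_conj !Im_conj.
  have := eAB; move/(congr1 val); rewrite aD !aX /= => e.
  move: (Creal_Re y) (Creal_Im y) (Creal_Re s) (Creal_Im s) e hy.
  set a := 'Re y; set b := 'Im y; set c := 'Re s; set sg := 'Im s.
  move=> ra rb rc rs e hb h.
  have e1 : c * (a * a - - b * - b) - sg * (a * - b + a * - b) - c
            = 2 * b * (a * sg - b * c) + c * (a ^+ 2 + b ^+ 2 - 1).
    ring.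
  rewrite e subrr mulr0 addr0 in e1.
  rewrite -subr_le0 e1 in h.
  by move: h; rewrite -mulrA pmulr_rle0.
have hA1 : A != 1.
  apply/negP => /eqP hA; move/negP: y1; apply.
  have : B ^+ 2 = 0.
    by move: eAB; rewrite hA; nra.
  move/eqP; rewrite expf_eq0 /= => /eqP hB.
  move/(congr1 val): hA; move/(congr1 val): hB => /= hB hA.
  by rewrite [y]Crect hA hB mulr0 addr0.
have [hc hsb] := @key_real algR _ _ _ _ eAB eCS hy hs hle hk' hA1.
apply/eqP; rewrite eqC; apply/andP; split; apply/eqP.
- exact: (congr1 val hc).
- exact: (congr1 val hsb).
Qed.

Lemma exmax n (F : 'I_n -> algR) : (0 < n)%N -> exists j0, forall j, F j <= F j0.
Proof.
move=> n0; pose i0 := Ordinal n0.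
case: (Order.TotalTheory.arg_maxP (i0:=i0) (P:=xpredT) F isT) => j0 _ h.
by exists j0 => j; apply: h.
Qed.


Lemma norm_root (n : nat) (z : algC) : (0 < n)%N -> z ^+ n = -1 -> `|z| = 1.
Proof.
case: n => // n _ hz.
have : `|z| ^+ n.+1 == 1 by rewrite -normrX hz normrN1.
by rewrite geC0_unit_exp // => /eqP.
Qed.

Lemma N1_neq1 : (-1 : algC) != 1.
Proof.
by rewrite lt_eqF // (lt_trans (ltrN10 _) ltr01).
Qed.

Lemma zeta_prim (n : nat) : (1 < n)%N -> forall k, (n.-root (-1 : algC) ^+ k == 1) = (2 * n %| k)%N.
Proof.
move=> n1; have n0 : (0 < n)%N by apply: ltn_trans n1.
set y := n.-root (-1).
have yn : y ^+ n = -1 by apply: rootCK.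
have ny : `|y| = 1 := @norm_root _ _ n0 yn.
have y2n : y ^+ (2 * n) = 1 by rewrite mulnC exprM yn expr2 mulrNN mulr1.
have hmax : forall z, z ^+ n = -1 -> 'Re z <= 'Re y.
  move=> z hz; case: (boolP (0 <= 'Im z)) => h.
    exact: rootC_Re_max.
  have hlt : 'Im z < 0 by rewrite real_ltNge ?rpred0 ?Creal_Im.
  rewrite -Re_conj; apply: rootC_Re_max => //.
    by rewrite -rmorphXn hz rmorphN1.
  by rewrite Im_conj oppr_ge0 ltW.
have hIy : 0 <= 'Im y by apply: Im_rootC_ge0.
have ycy : y^* * y = 1 by rewrite mulrC -normCK ny expr1n.
have yc2 : y^* ^+ 2 = y ^+ (2 * n.-1).
  rewrite -[LHS]mulr1 -y2n -[n in (2 * n)%N](prednK n0) mulnS exprD mulrA -exprMn ycy.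
  by rewrite expr1n mul1r.
have yc1 : y^* = y ^+ (2 * n).-1.
  by rewrite -[LHS]mulr1 -y2n -(prednK (_ : (0 < 2 * n)%N)) ?muln_gt0 ?n0 // exprS mulrA ycy mul1r.
have y1 : y != 1.
  by apply/negP => /eqP y1; move: yn; rewrite y1 expr1n => /eqP; rewrite eq_sym (negbTE N1_neq1).
have n20 : (0 < 2 * n)%N by rewrite muln_gt0 n0.
have [w pw] := C_prim_root_exists n20.
have wn : w ^+ n = -1.
  have : (w ^+ n) ^+ 2 == 1 by rewrite -exprM mulnC (prim_expr_order pw).
  rewrite sqrf_eq1 => /orP[|/eqP //].
  by rewrite -(prim_order_dvd pw) => /(dvdn_leq n0) h; exfalso; lia.
pose F (j : 'I_n) : algR := in_algR (Creal_Re (w * y ^+ (2 * j))).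
have [j0 hj0] := @exmax _ F n0.
set s0 := w * y ^+ (2 * j0).
have ypow : forall k, y ^+ (2 * k) = y ^+ (2 * (k %% n)).
  move=> k; rewrite {1}(divn_eq k n) mulnDr exprD.
  have -> : (2 * (k %/ n * n) = (2 * n) * (k %/ n))%N by lia.
  by rewrite exprM y2n expr1n mul1r.
have hall : forall k, 'Re (w * y ^+ (2 * k)) <= 'Re s0.
  move=> k; rewrite ypow.
  have := hj0 (Ordinal (ltn_pmod k n0)).
  by rewrite algR_le.
have s0n : s0 ^+ n = -1.
  by rewrite exprMn wn -exprM mulnAC exprM y2n expr1n mulr1.
have ns0 : `|s0| = 1 := @norm_root _ _ n0 s0n.
have h1 : 'Re (s0 * y ^+ 2) <= 'Re s0.
  by have := hall (j0 + 1)%N; rewrite mulnDr muln1 exprD mulrA.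
have h2 : 'Re (s0 * y^* ^+ 2) <= 'Re s0.
  by have := hall (j0 + n.-1)%N; rewrite mulnDr exprD mulrA yc2.
have [e he] : exists e, s0 = y ^+ e.
  case: (boolP (0 <= 'Im s0)) => hs.
    by exists 1%N; rewrite expr1; apply: key_C => //; apply: hmax.
  have hlt : 'Im s0 < 0 by rewrite real_ltNge ?rpred0 ?Creal_Im.
  exists (2 * n).-1; rewrite -yc1 -[s0]conjCK; congr (_^*).
  apply: key_C => //.
  - by rewrite norm_conjC.
  - by rewrite Im_conj oppr_ge0 ltW.
  - by apply: hmax; rewrite -rmorphXn s0n rmorphN1.
  - by rewrite -rmorphXn -rmorphM Re_conj Re_conj.
have wy : w = y ^+ (e + 2 * j0 * n.-1).
  rewrite exprD -he /s0 -mulrA -exprD -mulnA -mulnDr.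
  rewrite -{1}(muln1 j0) -mulnDr add1n prednK //.
  have -> : (2 * (j0 * n) = (2 * n) * j0)%N by lia.
  by rewrite exprM y2n expr1n mulr1.
move=> k; apply/idP/idP.
  move=> /eqP hk; rewrite (prim_order_dvd pw) wy -exprM mulnC exprM hk expr1n //.
by case/dvdnP => q ->; rewrite mulnC exprM y2n expr1n.
Qed.


Lemma nd_lem (n a b : nat) : (b < 2 * n)%N -> (a < b)%N -> ~~ (2 * n %| b - a)%N.
Proof.
move=> b2n ab.
apply/negP => /(dvdn_leq _) h.
have h0 : (0 < b - a)%N by rewrite subn_gt0.
have := h h0. lia.
Qed.

Lemma ablt_lem (a b m : nat) : (a < b)%N -> (a * m.+1 <= b * m.+1)%N.
Proof. move=> ab. by rewrite leq_mul2r ltnW ?orbT. Qed.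

Lemma fin_lem (n a b M : nat) : odd a -> odd b -> (a < b)%N ->
  (2 * n %| b * M - a * M)%N = (n %| (b - a)./2 * M)%N.
Proof.
move=> oa ob ab; rewrite -mulnBl.
have e : (b - a = 2 * (b - a)./2)%N.
  have o : odd (b - a) = false by rewrite oddB ?oa ?ob // ltnW.
  have := odd_double_half (b - a); rewrite o.
  move: ((b - a)./2) => h. rewrite -muln2 /=. lia.
by rewrite {1}e -mulnA dvdn_pmul2l.
Qed.

Theorem lemma4p7 (n d1 d2 s t a b : nat) :
  (2 < n)%N ->
  (d2 <= d1)%N -> (d1 <= n - 2)%N ->
  (1 <= s)%N -> (s < t)%N -> (t <= n)%N ->
  vsteps n d1 d2 =i [:: s; t] ->
  odd a -> odd b -> (0 < a)%N -> (a < b)%N -> (b < 2 * n)%N ->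
  (schur2 (R:=algC) n d1 d2 (zeta n ^+ a) (zeta n ^+ b) == 0)
    = (n %| (b - a)./2 * (t - s))%N.
Proof.
move=> hn h21 h1 hs hst ht hv oa ob a0 ab b2n.
have nd : ~~ (2 * n %| b - a)%N by apply: nd_lem.
have ablt : (a * (d1 - d2).+1 <= b * (d1 - d2).+1)%N by apply: ablt_lem.
have hts := @vsteps_ts _ _ _ _ _ h21 h1 hn hst hv.
rewrite hts schur2_eq //.
have hp := @zeta_prim n (ltnW hn).
rewrite /zeta; set y := n.-root (-1) in hp *.
have y0 : y != 0.
  by rewrite /y rootC_eq0 ?oppr_eq0 ?oner_eq0 //; lia.
have powE : forall p q, (p <= q)%N -> (y ^+ p == y ^+ q) = (2 * n %| q - p)%N.
  move=> p q hpq; rewrite -hp -(subnKC hpq) exprD subnKC //.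
  by rewrite -{1}(mulr1 (y ^+ p)) (inj_eq (mulfI (expf_neq0 _ y0))) eq_sym.
set m := (d1 - d2)%N.
set z1 := y ^+ a; set z2 := y ^+ b.
set S := \sum_(k < m.+1) z1 ^+ (m - k) * z2 ^+ k.
have eS : \sum_(k < m.+1) z1 ^+ (d1 - k) * z2 ^+ (d2 + k) = (z1 * z2) ^+ d2 * S.
  rewrite /S mulr_sumr; apply: eq_bigr => k _.
  have hk : (k <= m)%N by rewrite -ltnS.
  have em : m = (d1 - d2)%N by [].
  have -> : (d1 - k = d2 + (m - k))%N by clearbody m; lia.
  by rewrite !exprD exprMn -!mulrA; congr (_ * _); rewrite mulrCA.
have eX : z1 ^+ m.+1 - z2 ^+ m.+1 = (z1 - z2) * S by rewrite subrXX.
have z12 : z1 != z2.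
  by rewrite /z1 /z2 powE ?(ltnW ab).
have c0 : (z1 * z2) ^+ d2 != 0 by rewrite expf_neq0 // mulf_neq0 // expf_neq0.
rewrite eS mulf_eq0 (negbTE c0) /=.
have -> : (S == 0) = (z1 ^+ m.+1 == z2 ^+ m.+1).
  by rewrite -[RHS]subr_eq0 eX mulf_eq0 subr_eq0 (negbTE z12).
rewrite /z1 /z2 -!exprM powE; last exact: ablt.
exact: fin_lem.
Qed.
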